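(* In the setting below, let $p,q\in X$ with $|S_p\cap S_q|=1$, $|S_p|=2$ and $|S_q|=n$, and let $r\in X$ with $S_r\ne S_p$, $S_r\ne S_q$ and $|S_r|\ge 2$. Then either $S_r\subseteq S_q\setminus S_p$ or $S_r=(S_p\setminus S_q)\cup(S_q\setminus S_p)$.
   Context: Setting: $E=\{e_0,\dots,e_n\}\subset\mathbb R^n$ is the vertex set of an $n$-simplex with $e_0+\cdots+e_n=0$, and $X\subset\mathbb R^n\setminus\{0\}$ is a finite set with $E\subseteq X$, no element of $X$ a positive multiple of another, such that every $n+1$ points of $X$ are in good position. (A finite set $A$ is in conical position if $0\notin\operatorname{conv}A$ and no point of $A$ lies in the positive hull—set of nonnegative linear combinations—of the other points; it is in good position otherwise.) For $p\in X$, the support $S_p$ is the minimal subset of $E$ whose positive hull contains $p$. *)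

(* Defs.v *)
From HB Require Import structures.
From mathcomp Require Import all_boot all_order all_algebra.
From mathcomp Require Import finmap.
From mathcomp Require Import reals.
Set Implicit Arguments. Unset Strict Implicit. Unset Printing Implicit Defensive.
Import Order.TTheory GRing.Theory Num.Theory.
Local Open Scope ring_scope.
Local Open Scope fset_scope.

Section Defs.
Variables (R : realType) (n : nat).
Notation vec := 'rV[R]_n.

Definition affinely_independent (m : nat) (e : 'I_m -> vec) : Prop :=
  forall c : 'I_m -> R, \sum_(i < m) c i = 0 -> \sum_(i < m) c i *: e i = 0 ->
    forall i, c i = 0.

Definition in_conv (A : {fset vec}) (x : vec) : Prop :=
  exists c : vec -> R, (forall a, a \in A -> 0 <= c a) /\
    \sum_(a <- A) c a = 1 /\ \sum_(a <- A) c a *: a = x.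

Definition in_pos (A : {fset vec}) (x : vec) : Prop :=
  exists c : vec -> R, (forall a, a \in A -> 0 <= c a) /\
    \sum_(a <- A) c a *: a = x.

Definition conical_position (A : {fset vec}) : Prop :=
  ~ in_conv A 0 /\ forall a, a \in A -> ~ in_pos (A `\ a) a.

Definition good_position (A : {fset vec}) : Prop := ~ conical_position A.

Definition in_pos_idx (e : 'I_n.+1 -> vec) (S : {set 'I_n.+1}) (x : vec) : Prop :=
  exists c : 'I_n.+1 -> R, (forall i, 0 <= c i) /\ \sum_(i in S) c i *: e i = x.

Definition is_support (e : 'I_n.+1 -> vec) (p : vec) (S : {set 'I_n.+1}) : Prop :=
  in_pos_idx e S p /\ forall S' : {set 'I_n.+1}, S' \proper S -> ~ in_pos_idx e S' p.

Definition setting (e : 'I_n.+1 -> vec) (X : {fset vec}) : Prop :=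
  [/\ affinely_independent e,
      \sum_(i < n.+1) e i = 0,
      (forall i, e i \in X),
      0 \notin X
    & (forall x y t, x \in X -> y \in X -> 0 < t -> x = t *: y -> x = y)] /\
  (forall A : {fset vec}, A `<=` X -> #|` A| = n.+1 -> good_position A).

End Defs.

(* Main.v *)
Require Import Defs.
From HB Require Import structures.
From mathcomp Require Import all_boot all_order all_algebra.
From mathcomp Require Import finmap.
From mathcomp Require Import reals.
From mathcomp Require Import ring lra zify.
Import Order.TTheory GRing.Theory Num.Theory.
Local Open Scope ring_scope.

Lemma L0 (R : realType) (n : nat) (e : 'I_n.+1 -> 'rV[R]_n)
  (ai : affinely_independent e) (se : \sum_(i < n.+1) e i = 0) (d : 'I_n.+1 -> R) : \sum_i d i *: e i = 0 -> forall i j, d i = d j.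
Proof.
move=> H.
pose m := (\sum_i d i) / (n.+1)%:R.
have Hc : \sum_i (d i - m) = 0.
  rewrite sumrB sumr_const card_ord /m -[_ *+ n.+1]mulr_natr divfK ?subrr //.
  by rewrite pnatr_eq0.
have Hc2 : \sum_i (d i - m) *: e i = 0.
  under eq_bigr do rewrite scalerBl.
  by rewrite sumrB H -scaler_sumr se scaler0 subrr.
have := ai (fun i => d i - m) Hc Hc2 => Z i j.
by move: (Z i) (Z j) => /eqP; rewrite subr_eq0 => /eqP -> /eqP; rewrite subr_eq0 => /eqP ->.
Qed.

Lemma L0' (R : realType) (n : nat) (e : 'I_n.+1 -> 'rV[R]_n)
  (ai : affinely_independent e) (se : \sum_(i < n.+1) e i = 0) (m : nat) (C : 'I_m -> 'I_n.+1 -> R) (mu : 'I_m -> R) :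
  \sum_j mu j *: (\sum_i C j i *: e i) = 0 ->
  forall i, \sum_j mu j * C j i = \sum_j mu j * C j ord0.
Proof.
move=> H.
have H' : \sum_i (\sum_j mu j * C j i) *: e i = 0.
  rewrite -[RHS]H; under eq_bigr do rewrite scaler_suml.
  rewrite exchange_big /=; apply: eq_bigr => j _; rewrite scaler_sumr.
  by apply: eq_bigr => i _; rewrite scalerA.
by move=> i; exact: (@L0 R n e ai se _ H' i ord0).
Qed.


Lemma sum_delta (R : realType) (T : finType) (V : lmodType R) (F : T -> V) k :
  \sum_j ((j == k)%:R : R) *: F j = F k.
Proof.
rewrite (bigD1 k) //= eqxx scale1r big1 ?addr0 // => j /negbTE ->.
by rewrite scale0r.
Qed.

Lemma sumA_imfset (n : nat) (T : choiceType) (V : zmodType) (f : 'I_n.+1 -> T)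
  (G : T -> V) : injective f ->
  \sum_(a <- [fset f j | j : 'I_n.+1]%fset) G a = \sum_j G (f j).
Proof.
move=> fi; rewrite big_imfset //=; last by move=> x y _ _; apply: fi.
by rewrite big_enum.
Qed.

Lemma no_conical (R : realType) (n : nat) (e : 'I_n.+1 -> 'rV[R]_n) (X : {fset 'rV[R]_n})
  (f : 'I_n.+1 -> 'rV[R]_n) (C : 'I_n.+1 -> 'I_n.+1 -> R) :
  setting e X -> (forall j, f j \in X) -> (forall j, f j = \sum_i C j i *: e i) ->
  (forall mu : 'I_n.+1 -> R, (forall j, 0 <= mu j) -> \sum_j mu j = 1 ->
     (forall i, \sum_j mu j * C j i = \sum_j mu j * C j ord0) -> False) ->
  (forall k (mu : 'I_n.+1 -> R), mu k = -1 -> (forall j, j != k -> 0 <= mu j) ->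
     (forall i, \sum_j mu j * C j i = \sum_j mu j * C j ord0) -> False) -> False.
Proof.
case=> [[ai se eX _ _] gp] fX fC Ha Hb.
have rel : forall mu : 'I_n.+1 -> R, \sum_j mu j *: f j = 0 ->
    forall i, \sum_j mu j * C j i = \sum_j mu j * C j ord0.
  move=> mu H; apply: (@L0' R n e ai se n.+1 C mu); rewrite -[RHS]H.
  by apply: eq_bigr => j _; rewrite fC.
have fi : injective f.
  move=> j1 j2 E; apply/eqP; apply/negPn/negP => ne.
  apply: (Hb j2 (fun j => (j == j1)%:R - (j == j2)%:R)).
  - by rewrite eq_sym (negbTE ne) eqxx sub0r.
  - by move=> j ne2; rewrite (negbTE ne2) subr0 ler0n.
  - apply: rel; under eq_bigr do rewrite scalerBl.
    by rewrite sumrB !sum_delta E subrr.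
pose A := [fset f j | j : 'I_n.+1]%fset.
have memA : forall j, f j \in A by move=> j; apply: in_imfset.
have Acard : #|`A| = n.+1.
  by rewrite card_imfset //= size_enum_ord.
have AX : (A `<=` X)%fset.
  by apply/fsubsetP => x /imfsetP [j _ ->]; exact: fX.
apply: (gp A AX Acard); split.
- move=> [c [c0 [c1 c2]]]; apply: (Ha (fun j => c (f j))).
  + by move=> j; apply: c0; exact: memA.
  + by rewrite -(@sumA_imfset n _ _ f (fun a => c a) fi).
  + by apply: rel; rewrite -(@sumA_imfset n _ _ f (fun a => c a *: a) fi).
- move=> a /imfsetP [k _ ->] [c [c0 c2]].
  apply: (Hb k (fun j => if j == k then -1 else c (f j))).
  + by rewrite eqxx.
  + move=> j jk; rewrite (negbTE jk); apply: c0.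
    by rewrite in_fsetD1 memA andbT (inj_eq fi).
  + apply: rel; rewrite (bigD1 k) //= eqxx scaleN1r.
    have E : \sum_(a <- (A `\ f k)%fset) c a *: a = \sum_(j | j != k) c (f j) *: f j.
      apply: (@addrI _ (c (f k) *: f k)).
      rewrite -(big_fsetD1 (f k) (F := fun a => c a *: a) (memA k)) /=.
      by rewrite (@sumA_imfset n _ _ f (fun a => c a *: a) fi) (bigD1 k).
    rewrite -[X in - _ + X](_ : \sum_(j | j != k) c (f j) *: f j = _); last first.
      by apply: eq_bigr => j /negbTE ->.
    by rewrite -E c2 addNr.
Qed.

Definition Dq (R : realType) (n : nat) (cx cy : 'I_n.+1 -> R) (u v j : 'I_n.+1) : R :=
  (cx u - cx v) * (cy j - cy v) - (cy u - cy v) * (cx j - cx v).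
Arguments Dq {R n}.

Lemma Csum2 (R : realType) (n : nat) (cx cy : 'I_n.+1 -> R) (u v : 'I_n.+1) (mu : 'I_n.+1 -> R) i :
  u != v ->
  \sum_j mu j * (if j == u then cx i else if j == v then cy i else ((i == j)%:R : R)) =
  mu u * cx i + mu v * cy i + (if (i != u) && (i != v) then mu i else 0).
Proof.
move=> uv.
rewrite (bigD1 u) //= eqxx (bigD1 v) /=; last by rewrite eq_sym.
rewrite (negbTE (_ : v != u)) ?eqxx; last by rewrite eq_sym.
rewrite addrA; congr (_ + _).
case: (boolP ((i != u) && (i != v))) => h.
  rewrite (bigD1 i) /=; last exact: h.
  move/andP: h => [/negbTE -> /negbTE ->]; rewrite eqxx mulr1 big1 ?addr0 //.
  move=> j /andP [/andP [/negbTE -> /negbTE ->]] ji.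
  by rewrite eq_sym (negbTE ji) mulr0.
rewrite big1 // => j /andP [/negbTE ju /negbTE jv]; rewrite ju jv.
case: eqP => [ij|]; last by rewrite mulr0.
by move: h; rewrite ij ju jv.
Qed.

Lemma pair_contra (R : realType) (n : nat) (e : 'I_n.+1 -> 'rV[R]_n) (X : {fset 'rV[R]_n})
  (x y : 'rV[R]_n) (cx cy : 'I_n.+1 -> R) (u v : 'I_n.+1) :
  setting e X -> x \in X -> y \in X ->
  x = \sum_i cx i *: e i -> y = \sum_i cy i *: e i -> u != v ->
  0 < cx u - cx v ->
  ((0 < cy u - cy v /\
    (exists j1, [/\ j1 != u, j1 != v & 0 < Dq cx cy u v j1]) /\
    (exists j2, [/\ j2 != u, j2 != v & Dq cx cy u v j2 < 0])) \/
   (cy u - cy v < 0 /\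
    (exists j1 j2, [/\ j1 != j2, j1 != u, j1 != v, j2 != u & j2 != v] /\
      0 < Dq cx cy u v j1 /\ 0 < Dq cx cy u v j2))) -> False.
Proof.
move=> st xX yX xE yE uv xu0 Hc.
have vu : v != u by rewrite eq_sym.
have key : forall mu : 'I_n.+1 -> R,
   (forall i, \sum_j mu j * (if j == u then cx i else if j == v then cy i else ((i == j)%:R : R))
       = \sum_j mu j * (if j == u then cx ord0 else if j == v then cy ord0 else ((ord0 == j)%:R : R))) ->
   mu u * (cx u - cx v) + mu v * (cy u - cy v) = 0 /\
   forall j, j != u -> j != v ->
     (cx u - cx v) * mu j = - mu v * Dq cx cy u v j /\ (cy u - cy v) * mu j = mu u * Dq cx cy u v j.
  move=> mu H.
  have E : forall i, mu u * cx i + mu v * cy i + (if (i != u) && (i != v) then mu i else 0)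
      = \sum_j mu j * (if j == u then cx ord0 else if j == v then cy ord0 else ((ord0 == j)%:R : R)).
    by move=> i; rewrite -(@Csum2 R n cx cy u v mu i uv); exact: H.
  have Eu0 := E u; have Ev0 := E v.
  rewrite eqxx /= addr0 in Eu0; rewrite eqxx andbF addr0 in Ev0.
  have Eu : mu u * (cx u - cx v) + mu v * (cy u - cy v) = 0.
    have -> : mu u * (cx u - cx v) + mu v * (cy u - cy v) =
       (mu u * cx u + mu v * cy u) - (mu u * cx v + mu v * cy v) by ring.
    by rewrite Eu0 Ev0 subrr.
  split => // j ju jv.
  have Ej := E j; rewrite ju jv /= -Ev0 in Ej.
  have Ej' : mu j = mu u * (cx v - cx j) + mu v * (cy v - cy j).
    apply/eqP; rewrite -subr_eq0; apply/eqP.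
    transitivity ((mu u * cx j + mu v * cy j + mu j) - (mu u * cx v + mu v * cy v)); first by ring.
    by rewrite Ej subrr.
  split; apply/eqP; rewrite -subr_eq0 Ej' /Dq; apply/eqP.
    transitivity ((cx v - cx j) * (mu u * (cx u - cx v) + mu v * (cy u - cy v))).
      by ring.
    by rewrite Eu mulr0.
  transitivity ((cy v - cy j) * (mu u * (cx u - cx v) + mu v * (cy u - cy v))).
    by ring.
  by rewrite Eu mulr0.
apply: (@no_conical R n e X (fun j => if j == u then x else if j == v then y else e j)
   (fun j i => if j == u then cx i else if j == v then cy i else ((i == j)%:R : R)) st).
- move=> j; case: (j == u) => //; case: (j == v) => //.
  by case: st => [[_ _ eX _ _] _]; apply: eX.
- move=> j; case: (j == u) => //; case: (j == v) => //.
  by rewrite sum_delta.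
- move=> mu m0 m1 H; have [Eu I] := key mu H.
  have zuv : mu u = 0 /\ mu v = 0.
    case: Hc => [[yu0 _] | [yu0 [j1 [j2 [[_ j1u j1v _ _] [D1 _]]]]]].
    + have h1 := m0 u; have h2 := m0 v.
      have h3 := mulr_ge0 h1 (ltW xu0); have h4 := mulr_ge0 h2 (ltW yu0).
      have z1 : mu u * (cx u - cx v) = 0 by lra.
      have z2 : mu v * (cy u - cy v) = 0 by lra.
      move/eqP: z1; rewrite mulf_eq0 (gt_eqF xu0) orbF => /eqP z1.
      move/eqP: z2; rewrite mulf_eq0 (gt_eqF yu0) orbF => /eqP z2.
      by [].
    + have [I1 _] := I j1 j1u j1v.
      have h1 := mulr_ge0 (ltW xu0) (m0 j1).
      have h2 := m0 v.
      have z2 : mu v * Dq cx cy u v j1 = 0.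
        have h3 := mulr_ge0 h2 (ltW D1); lra.
      move/eqP: z2; rewrite mulf_eq0 (gt_eqF D1) orbF => /eqP z2.
      rewrite z2 mul0r addr0 in Eu.
      move/eqP: Eu; rewrite mulf_eq0 (gt_eqF xu0) orbF => /eqP z1.
      by [].
  have all0 : forall j, mu j = 0.
    move=> j; case: (eqVneq j u) => [->|ju]; first by case: zuv.
    case: (eqVneq j v) => [->|jv]; first by case: zuv.
    have [I1 _] := I j ju jv; case: zuv => _ zv; rewrite zv oppr0 mul0r in I1.
    by move/eqP: I1; rewrite mulf_eq0 (gt_eqF xu0) => /eqP.
  by move: m1; rewrite big1 // => /eqP; rewrite eq_sym oner_eq0.
- move=> k mu mk m0 H; have [Eu I] := key mu H.
  have zero_uv : mu u = 0 -> mu v = 0 -> mu k = 0.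
    move=> zu zv; case: (eqVneq k u) => [->|ku] //; case: (eqVneq k v) => [->|kv] //.
    have [I1 _] := I k ku kv; rewrite zv oppr0 mul0r in I1.
    by move/eqP: I1; rewrite mulf_eq0 (gt_eqF xu0) => /eqP.
  case: (eqVneq k u) => [ku|ku].
    subst k.
    case: Hc => [[yu0 [[j1 [j1u j1v D1]] _]] | [yu0 _]].
    + have [_ I2] := I j1 j1u j1v; rewrite mk in I2.
      have h := mulr_ge0 (ltW yu0) (m0 j1 j1u); clear -I2 h D1; lra.
    + have h := m0 v vu; rewrite mk in Eu; clear -h Eu yu0 xu0; nra.
  case: (eqVneq k v) => [kv|kv].
    subst k.
    case: Hc => [[yu0 [_ [j2 [j2u j2v D2]]]] | [yu0 _]].
    + have [I1 _] := I j2 j2u j2v; rewrite mk in I1.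
      have h := mulr_ge0 (ltW xu0) (m0 j2 j2v); clear -I1 h D2; lra.
    + have h := m0 u uv; rewrite mk in Eu; clear -h Eu yu0 xu0; nra.
  have hu : 0 <= mu u by apply: m0; rewrite eq_sym.
  have hv : 0 <= mu v by apply: m0; rewrite eq_sym.
  have [zu zv] : mu u = 0 /\ mu v = 0.
    case: Hc => [[yu0 _] | [yu0 [j1 [j2 [[j12 j1u j1v j2u j2v] [D1 D2]]]]]].
    + have h3 := mulr_ge0 hu (ltW xu0); have h4 := mulr_ge0 hv (ltW yu0).
      have z1 : mu u * (cx u - cx v) = 0 by clear -Eu h3 h4; lra.
      have z2 : mu v * (cy u - cy v) = 0 by clear -Eu h3 h4; lra.
      move/eqP: z1; rewrite mulf_eq0 (gt_eqF xu0) orbF => /eqP z1.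
      move/eqP: z2; rewrite mulf_eq0 (gt_eqF yu0) orbF => /eqP z2.
      by [].
    + have [j [ju jv jk Dj]] : exists j, [/\ j != u, j != v, j != k & 0 < Dq cx cy u v j].
        case: (eqVneq j1 k) => [e1|n1]; last by exists j1.
        by exists j2; split => //; rewrite -e1 eq_sym.
      have [I1 _] := I j ju jv.
      have h1 := mulr_ge0 (ltW xu0) (m0 j jk).
      have z2 : mu v * Dq cx cy u v j = 0.
        have h3 := mulr_ge0 hv (ltW Dj); clear -I1 h1 h3; lra.
      move/eqP: z2; rewrite mulf_eq0 (gt_eqF Dj) orbF => /eqP z2.
      rewrite z2 mul0r addr0 in Eu.
      move/eqP: Eu; rewrite mulf_eq0 (gt_eqF xu0) orbF => /eqP z1.
      by [].
  by move: (zero_uv zu zv); rewrite mk => /eqP; rewrite oppr_eq0 oner_eq0.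
Qed.

Lemma Csum1 (R : realType) (n : nat) (cx : 'I_n.+1 -> R) (v : 'I_n.+1) (mu : 'I_n.+1 -> R) i :
  \sum_j mu j * (if j == v then cx i else ((i == j)%:R : R)) =
  mu v * cx i + (if i != v then mu i else 0).
Proof.
rewrite (bigD1 v) //= eqxx; congr (_ + _).
case: (boolP (i != v)) => h.
  rewrite (bigD1 i) //= (negbTE h) eqxx mulr1 big1 ?addr0 //.
  move=> j /andP [/negbTE -> ji].
  by rewrite eq_sym (negbTE ji) mulr0.
rewrite big1 // => j /negbTE jv; rewrite jv.
case: eqP => [ij|]; last by rewrite mulr0.
by move: h; rewrite ij jv.
Qed.

Lemma single_contra (R : realType) (n : nat) (e : 'I_n.+1 -> 'rV[R]_n) (X : {fset 'rV[R]_n})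
  (x : 'rV[R]_n) (cx : 'I_n.+1 -> R) (v i0 i1 i2 : 'I_n.+1) :
  setting e X -> x \in X -> x = \sum_i cx i *: e i ->
  i0 != v -> cx i0 - cx v < 0 ->
  i1 != i2 -> i1 != v -> i2 != v -> 0 < cx i1 - cx v -> 0 < cx i2 - cx v -> False.
Proof.
move=> st xX xE i0v D0 i12 i1v i2v D1 D2.
have key : forall mu : 'I_n.+1 -> R,
   (forall i, \sum_j mu j * (if j == v then cx i else ((i == j)%:R : R))
       = \sum_j mu j * (if j == v then cx ord0 else ((ord0 == j)%:R : R))) ->
   forall j, j != v -> mu j = - mu v * (cx j - cx v).
  move=> mu H j jv.
  have E : forall i, mu v * cx i + (if i != v then mu i else 0)
      = \sum_j mu j * (if j == v then cx ord0 else ((ord0 == j)%:R : R)).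
    by move=> i; rewrite -(@Csum1 R n cx v mu i); exact: H.
  have Ev := E v; have Ej := E j; rewrite eqxx /= addr0 in Ev.
  rewrite jv -Ev in Ej.
  apply/eqP; rewrite -subr_eq0; apply/eqP.
  transitivity ((mu v * cx j + mu j) - mu v * cx v); first by ring.
  by rewrite Ej subrr.
apply: (@no_conical R n e X (fun j => if j == v then x else e j)
   (fun j i => if j == v then cx i else ((i == j)%:R : R)) st).
- move=> j; case: (j == v) => //.
  by case: st => [[_ _ eX _ _] _]; apply: eX.
- move=> j; case: (j == v) => //.
  by rewrite sum_delta.
- move=> mu m0 m1 H; have K := key mu H.
  have zv : mu v = 0.
    have := K i1 i1v => h1; have h2 := m0 i1; have h3 := m0 v.
    rewrite h1 in h2.
    have : mu v * (cx i1 - cx v) <= 0 by clear -h2; lra.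
    move=> h4; have h5 := mulr_ge0 h3 (ltW D1).
    have : mu v * (cx i1 - cx v) = 0 by clear -h4 h5; lra.
    by move/eqP; rewrite mulf_eq0 (gt_eqF D1) orbF => /eqP.
  move: m1; rewrite big1 => [/eqP|j _]; first by rewrite eq_sym oner_eq0.
  case: (eqVneq j v) => [->//|jv]; by rewrite K // zv oppr0 mul0r.
- move=> k mu mk m0 H; have K := key mu H.
  case: (eqVneq k v) => [kv|kv].
    subst k; have h := m0 i0 i0v; rewrite K // mk opprK mul1r in h.
    by clear -h D0; lra.
  have [j [jv jk Dj]] : exists j, [/\ j != v, j != k & 0 < cx j - cx v].
    case: (eqVneq i1 k) => [e1|n1]; last by exists i1.
    by exists i2; split => //; rewrite -e1 eq_sym.
  have hv : 0 <= mu v by apply: m0; rewrite eq_sym.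
  have h := m0 j jk; rewrite K // in h.
  have zv : mu v = 0.
    have h5 := mulr_ge0 hv (ltW Dj).
    have : mu v * (cx j - cx v) = 0 by clear -h h5; lra.
    by move/eqP; rewrite mulf_eq0 (gt_eqF Dj) orbF => /eqP.
  by move: mk; rewrite K // zv oppr0 mul0r => /eqP; rewrite eq_sym oppr_eq0 oner_eq0.
Qed.

Lemma support_coef (R : realType) (n : nat) (e : 'I_n.+1 -> 'rV[R]_n) x S :
  is_support e x S -> exists c : 'I_n.+1 -> R,
    [/\ (forall i, i \in S -> 0 < c i), (forall i, i \notin S -> c i = 0)
      & x = \sum_i c i *: e i].
Proof.
case=> [[c [c0 cE]] Hmin].
exists (fun i => if i \in S then c i else 0); split.
- move=> i iS; rewrite iS lt_def c0 andbT; apply/negP => /eqP ci0.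
  apply: (Hmin (S :\ i)); first by rewrite properD1.
  exists c; split => //; rewrite -cE [RHS](bigD1 i) //= ci0 scale0r add0r.
  by apply: eq_bigl => j; rewrite in_setD1 andbC.
- by move=> i /negbTE ->.
- rewrite -cE big_mkcond /=; apply: eq_bigr => i _.
  by case: (i \in S) => //; rewrite scale0r.
Qed.

Lemma support_notT (R : realType) (n : nat) (e : 'I_n.+1 -> 'rV[R]_n) x S :
  \sum_(i < n.+1) e i = 0 -> is_support e x S -> S != setT.
Proof.
move=> se [[c [c0 cE]] Hmin]; apply/negP => /eqP ST.
have [i0 _ Hm] := @arg_minP _ R _ ord0 xpredT c isT.
apply: (Hmin (setT :\ i0)); first by rewrite ST properD1 ?in_setT.
exists (fun i => c i - c i0); split.
  by move=> i; rewrite subr_ge0; apply: Hm.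
transitivity (\sum_i (c i - c i0) *: e i).
  rewrite [RHS](bigD1 i0) //= subrr scale0r add0r.
  by apply: eq_bigl => i; rewrite in_setD1 in_setT andbT.
under eq_bigr do rewrite scalerBl.
rewrite sumrB -scaler_sumr se scaler0 subr0 -cE ST.
by apply: eq_bigl => i; rewrite in_setT.
Qed.

Lemma exists_other (n : nat) (S : {set 'I_n.+1}) z :
  (2 <= #|S|)%N -> exists t, t \in S /\ t != z.
Proof.
move=> cS; case/boolP: (S \subset [set z]) => [/subset_leq_card|/subsetPn [t tS tz]].
  by rewrite cards1 => h; have := leq_trans cS h.
by exists t; split => //; rewrite inE in tz.
Qed.

Theorem proposition6p10 (R : realType) (n : nat) (e : 'I_n.+1 -> 'rV[R]_n)
  (X : {fset 'rV[R]_n}) (p q r : 'rV[R]_n) (Sp Sq Sr : {set 'I_n.+1}) :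
  setting e X ->
  p \in X -> q \in X -> r \in X ->
  is_support e p Sp -> is_support e q Sq -> is_support e r Sr ->
  #|Sp :&: Sq| = 1%N -> #|Sp| = 2%N -> #|Sq| = n ->
  Sr != Sp -> Sr != Sq -> (2 <= #|Sr|)%N ->
  Sr \subset Sq :\: Sp \/ Sr = (Sp :\: Sq) :|: (Sq :\: Sp).
Proof.
move=> st pX qX rX supP supQ supR cPQ cP cQ rP rQ cR.
have se : \sum_(i < n.+1) e i = 0 by case: st => [[]].
have [a Ea] : exists a, Sp :&: Sq = [set a] by apply/cards1P; rewrite cPQ.
have : a \in Sp :&: Sq by rewrite Ea set11.
rewrite inE => /andP [aP aQ].
have [b Eb] : exists b, Sp :\ a = [set b].
  apply/cards1P; move: (cardsD1 a Sp); rewrite aP cP /=; lia.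
have : b \in Sp :\ a by rewrite Eb set11.
rewrite !inE => /andP [ba bP].
have bQ : b \notin Sq.
  apply/negP => bQ; have : b \in Sp :&: Sq by rewrite inE bP bQ.
  by rewrite Ea inE (negbTE ba).
have SpE : Sp = [set a; b].
  apply/setP => i; rewrite !inE; case: (eqVneq i a) => [->|ia] //=.
  have : (i \in Sp :\ a) = (i \in Sp) by rewrite !inE ia.
  by rewrite Eb inE => <-.
have SqE : Sq = [set~ b].
  apply/eqP; rewrite eqEcard cardsC1 card_ord cQ leqnn andbT.
  apply/subsetP => i iQ; rewrite !inE; apply: contraTneq iQ => ->; exact: bQ.
have [cp [cp_pos cp_zero pE]] := @support_coef R n e p Sp supP.
have [cq [cq_pos cq_zero qE]] := @support_coef R n e q Sq supQ.
have [cr [cr_pos cr_zero rE]] := @support_coef R n e r Sr supR.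
have ab : a != b by rewrite eq_sym.
have cpa : 0 < cp a by apply: cp_pos.
have cpb : 0 < cp b by apply: cp_pos.
have cp0 : forall i, i != a -> i != b -> cp i = 0.
  by move=> i ia ib; apply: cp_zero; rewrite SpE !inE negb_or ia ib.
have cqb : cq b = 0 by apply: cq_zero.
have cqp : forall i, i != b -> 0 < cq i.
  by move=> i ib; apply: cq_pos; rewrite SqE !inE.
have crS : forall i, i \in Sr -> 0 < cr i by [].
case: (boolP (a \in Sr)) => aR; case: (boolP (b \in Sr)) => bR.
-
  exfalso.
  have [t [tR tab]] : exists t, t \in Sr /\ t \notin Sp.
    have : ~~ (Sr \subset Sp).
      apply: contra rP => sub; rewrite eqEsubset sub /=.
      by apply/subsetP => i; rewrite SpE !inE => /orP [] /eqP ->.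
    by case/subsetPn => t tR tP; exists t.
  move: tab; rewrite SpE !inE negb_or => /andP [ta tb].
  have [u0 u0R] : exists u0, u0 \notin Sr.
    have : ~~ (setT \subset Sr).
      apply: contraNN (@support_notT R n e r Sr se supR) => sub.
      by rewrite eqEsubset subsetT.
    by case/subsetPn => u0 _ u0R; exists u0.
  have u0a : u0 != a by apply: contraNneq u0R => ->.
  have u0b : u0 != b by apply: contraNneq u0R => ->.
  have tu0 : t != u0 by apply: contraNneq u0R => <-.
  have cra := crS a aR; have crb := crS b bR; have crt := crS t tR.
  have cru := cr_zero u0 u0R.
  have cqa := cqp a ab; have cqt := cqp t tb; have cqu := cqp u0 u0b.
  case: (boolP ((cq u0 <= cq a) && (cq u0 <= cq t))) => [/andP [h1 h2]|hn].
    apply: (@pair_contra R n e X r q cr cq b u0 st rX qX rE qE).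
    + by rewrite eq_sym.
    + by rewrite cru subr0.
    + right; split; first by rewrite cqb sub0r oppr_lt0.
      exists a, t; split.
        by split; [rewrite eq_sym | exact: ab | rewrite eq_sym | exact: tb | exact: tu0].
      rewrite /Dq cqb cru !subr0 sub0r; split.
        have g1 : 0 <= cr b * (cq a - cq u0) by apply: mulr_ge0; [exact: ltW | rewrite subr_ge0].
        have g2 : 0 < cq u0 * cr a by apply: mulr_gt0.
        by clear -g1 g2; lra.
      have g1 : 0 <= cr b * (cq t - cq u0) by apply: mulr_ge0; [exact: ltW | rewrite subr_ge0].
      have g2 : 0 < cq u0 * cr t by apply: mulr_gt0.
      by clear -g1 g2; lra.
  have [eat ltu] : cq a = cq t /\ cq t < cq u0.
    rewrite negb_and -!ltNge in hn.
    case: (ltgtP (cq a) (cq t)) => [lat|lta|eat].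
    - exfalso; apply: (@single_contra R n e X q cq a b t u0 st qX qE ba).
      + by rewrite cqb sub0r oppr_lt0.
      + exact: tu0.
      + exact: ta.
      + exact: u0a.
      + by rewrite subr_gt0.
      + by rewrite subr_gt0; case/orP: hn => h //; apply: lt_trans lat h.
    - exfalso; apply: (@single_contra R n e X q cq t b a u0 st qX qE).
      + by rewrite eq_sym.
      + by rewrite cqb sub0r oppr_lt0.
      + by rewrite eq_sym.
      + by rewrite eq_sym.
      + by rewrite eq_sym.
      + by rewrite subr_gt0.
      + by rewrite subr_gt0; case/orP: hn => h //; apply: lt_trans lta h.
    - by split => //; case/orP: hn => //; rewrite eat.
  apply: (@pair_contra R n e X p q cp cq b t st pX qX pE qE).
  + by rewrite eq_sym.
  + by rewrite (cp0 t ta tb) subr0.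
  + right; split; first by rewrite cqb sub0r oppr_lt0.
    exists a, u0; split.
      by split; [rewrite eq_sym | exact: ab | rewrite eq_sym | exact: u0b | rewrite eq_sym].
    rewrite /Dq cqb (cp0 t ta tb) (cp0 u0 u0a u0b) !subr0 sub0r eat subrr mulr0 add0r.
    split.
      by rewrite mulNr opprK; apply: mulr_gt0.
    rewrite mulr0 subr0; have : 0 < cq u0 - cq t by rewrite subr_gt0.
    by move=> h; apply: mulr_gt0.
-
  exfalso.
  have [u0 u0Q u0R] : exists2 u0, u0 \in Sq & u0 \notin Sr.
    have : ~~ (Sq \subset Sr).
      apply: contra rQ => sub; rewrite eqEsubset sub andbT.
      apply/subsetP => i iR; rewrite SqE !inE.
      by apply: contraNneq bR => <-.
    by case/subsetPn => u0 u0Q u0R; exists u0.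
  have u0b : u0 != b by move: u0Q; rewrite SqE !inE.
  have u0a : u0 != a by apply: contraNneq u0R => ->.
  have [t [tR ta]] := @exists_other n Sr a cR.
  have tb : t != b by apply: contraNneq bR => <-.
  have tu0 : t != u0 by apply: contraNneq u0R => <-.
  have cra := crS a aR; have crt := crS t tR.
  have cru := cr_zero u0 u0R; have crb := cr_zero b bR.
  apply: (@pair_contra R n e X p r cp cr a u0 st pX rX pE rE).
  + by rewrite eq_sym.
  + by rewrite (cp0 u0 u0a u0b) subr0.
  + left; split; first by rewrite cru subr0.
    split.
      exists t; split => //; rewrite /Dq cru (cp0 u0 u0a u0b) (cp0 t ta tb) !subr0 mulr0 subr0.
      exact: mulr_gt0.
    exists b; split; [exact: ba | by rewrite eq_sym | ]; rewrite /Dq cru (cp0 u0 u0a u0b) crb !subr0 mulr0 sub0r oppr_lt0.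
    exact: mulr_gt0.
- case: (eqVneq Sr [set~ a]) => [E|ne].
    right; rewrite E SpE SqE; apply/setP => i; rewrite !inE.
    case: (eqVneq i a) => [->|ia]; first by rewrite (negbTE ab).
    by case: (i == b).
  exfalso.
  have [u0 u0R u0a] : exists2 u0, u0 \notin Sr & u0 != a.
    have : ~~ ([set~ a] \subset Sr).
      apply: contra ne => sub; rewrite eqEsubset sub andbT.
      apply/subsetP => i iR; rewrite !inE.
      by apply: contraNneq aR => <-.
    by case/subsetPn => u0 u0Q u0R; exists u0; rewrite // -in_setC1.
  have u0b : u0 != b by apply: contraNneq u0R => ->.
  have [t [tR tb]] := @exists_other n Sr b cR.
  have ta : t != a by apply: contraNneq aR => <-.
  have crb := crS b bR; have crt := crS t tR.
  have cru := cr_zero u0 u0R; have cra := cr_zero a aR.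
  apply: (@pair_contra R n e X p r cp cr b u0 st pX rX pE rE).
  + by rewrite eq_sym.
  + by rewrite (cp0 u0 u0a u0b) subr0.
  + left; split; first by rewrite cru subr0.
    split.
      exists t; split => //; first by apply: contraNneq u0R => <-.
      rewrite /Dq cru (cp0 u0 u0a u0b) (cp0 t ta tb) !subr0 mulr0 subr0.
      exact: mulr_gt0.
    exists a; split; [exact: ab | by rewrite eq_sym | ]; rewrite /Dq cru (cp0 u0 u0a u0b) cra !subr0 mulr0 sub0r oppr_lt0.
    exact: mulr_gt0.
- left; apply/subsetP => i iR; rewrite SqE SpE !inE.
  have ia : i != a by apply: contraNneq aR => <-.
  have ib : i != b by apply: contraNneq bR => <-.
  by rewrite (negbTE ia) (negbTE ib).
Qed.
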